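(* Let $S$ be a set of binary words all of the same length and the same weight, and let $\mathcal{L}$ be a list which is a homogeneous Gray code for $S$ and which is suffix partitioned. Then $\mathcal{L}$ is a recursive tail partitioned list.
   Context: The weight of a binary word is its number of 1's. Two binary words differ by a homogeneous transposition if one is obtained from the other by exchanging a 1 and a 0 such that no 1 occurs strictly between the two exchanged positions. A homogeneous Gray code for $S$ is a list containing each word of $S$ exactly once in which any two consecutive words differ by a homogeneous transposition. A list of binary words is suffix partitioned if, for every word $s$, the words of the list having $s$ as a suffix occupy consecutive positions in the list. The tail of a binary word is its unique suffix of the form $01^m$ ($m\ge 0$); the words $1^n$ have no tail. Notation: $\mathcal{A}\cdot w$ denotes the list obtained by appending the word $w$ to the end of each word of the list $\mathcal{A}$, and a comma denotes concatenation of lists. A list of same-length binary words is recursive tail partitioned if it is empty or consists of a single word, or if it has one of the forms $\mathcal{L}=\mathcal{L}_1\cdot 01^u,\ \mathcal{L}_2\cdot 01^{u+1},\ \dots,\ \mathcal{L}_{\ell+1}\cdot 01^{u+\ell}$ or $\mathcal{L}=\mathcal{L}_1\cdot 01^{u+\ell},\ \mathcal{L}_2\cdot 01^{u+\ell-1},\ \dots,\ \mathcal{L}_{\ell+1}\cdot 01^{u}$ for some integers $u,\ell\ge 0$, where each list $\mathcal{L}_i$ (possibly empty) is in turn recursive tail partitioned. (That is, words are grouped by tail, with tail lengths increasing or decreasing along the list, and the list obtained by deleting the common tail from each group is again of this kind.) *)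

(* Defs.v *)
From mathcomp Require Import all_boot.
Set Implicit Arguments. Unset Strict Implicit. Unset Printing Implicit Defensive.

(* Binary words are [seq bool] ([true] = 1, [false] = 0), read left to right;
   a suffix is an end segment of the sequence; [u ++ w] appends [w] to [u]. *)
Definition word := seq bool.

Definition weight (w : word) : nat := count id w.

Definition hom_transp (u v : word) : Prop :=
  exists i j : nat,
    [/\ i < j, j < size u, nth false u i != nth false u j,
        (forall l, i < l -> l < j -> nth false u l = false) &
        v = set_nth false (set_nth false u i (nth false u j)) j (nth false u i)].

Definition differ_hom (u v : word) : Prop := hom_transp u v \/ hom_transp v u.

Definition hom_gray_code (S : pred word) (L : seq word) : Prop :=
  [/\ uniq L, (forall w, (w \in L) = S w) &
      (forall i, i.+1 < size L -> differ_hom (nth [::] L i) (nth [::] L i.+1))].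

Definition suffix_partitioned (L : seq word) : Prop :=
  forall (s : word) (i l j : nat), i <= l -> l <= j -> j < size L ->
    suffix s (nth [::] L i) -> suffix s (nth [::] L j) -> suffix s (nth [::] L l).

Definition tail_word (m : nat) : word := false :: nseq m true.

Definition same_length (L : seq word) : Prop :=
  forall w w', w \in L -> w' \in L -> size w = size w'.

Definition glue (Ls : seq (seq word)) (f : nat -> nat) : seq word :=
  flatten [seq [seq w ++ tail_word (f i) | w <- nth [::] Ls i] | i <- iota 0 (size Ls)].

Inductive rtp : seq word -> Prop :=
| rtp_nil : rtp [::]
| rtp_single (w : word) : rtp [:: w]
| rtp_incr (Ls : seq (seq word)) (u : nat) :
    0 < size Ls -> (forall X, X \in Ls -> rtp X) ->
    same_length (glue Ls (fun i => u + i)) ->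
    rtp (glue Ls (fun i => u + i))
| rtp_decr (Ls : seq (seq word)) (u : nat) :
    0 < size Ls -> (forall X, X \in Ls -> rtp X) ->
    same_length (glue Ls (fun i => u + (size Ls).-1 - i)) ->
    rtp (glue Ls (fun i => u + (size Ls).-1 - i)).

Definition recursive_tail_partitioned (L : seq word) : Prop := rtp L.

(* Main.v *)
Require Import Defs.
From mathcomp Require Import all_boot zify.
Set Implicit Arguments. Unset Strict Implicit. Unset Printing Implicit Defensive.

Definition tz (w : word) := find negb (rev w).
Definition drp (T w : word) := take (size w - size T) w.

Lemma has_false (w : word) : false \in w -> has negb w.
Proof. by move=> H; apply/hasP; exists false. Qed.

Lemma tz_lt (w : word) : false \in w -> tz w < size w.
Proof. by move=> /has_false H; rewrite /tz -size_rev -has_find has_rev. Qed.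

Lemma tz_zero (w : word) : false \in w -> nth false w (size w - (tz w).+1) = false.
Proof.
move=> H; have Hl := tz_lt H.
have Hh : has negb (rev w) by rewrite has_rev has_false.
have := nth_find false Hh.
rewrite nth_rev //; by move=> /negbTE.
Qed.

Lemma tz_one (w : word) p : size w - tz w <= p -> p < size w -> nth false w p = true.
Proof.
move=> H1 H2.
have Hq : size w - p.+1 < tz w by lia.
have := before_find false Hq.
rewrite nth_rev; last by lia.
have -> : size w - (size w - p.+1).+1 = p by lia.
by move=> /negbFE.
Qed.

Lemma tz_le (w : word) p : p < size w -> nth false w p = false -> tz w <= size w - p.+1.
Proof.
move=> H1 H2; rewrite leqNgt; apply/negP => H3.
by rewrite tz_one in H2 => //; lia.
Qed.

Lemma size_tail m : size (tail_word m) = m.+1.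
Proof. by rewrite /= size_nseq. Qed.

Lemma tz_cat P m : tz (P ++ tail_word m) = m.
Proof.
rewrite /tz rev_cat /tail_word rev_cons rev_nseq -cats1 -catA find_cat has_nseq /=.
by rewrite size_nseq addn0; case: m.
Qed.

Lemma tz_decomp (w : word) : false \in w -> w = drp (tail_word (tz w)) w ++ tail_word (tz w).
Proof.
move=> H; have Hl := tz_lt H; rewrite /drp size_tail.
set k := size w - (tz w).+1.
rewrite -[X in X = _](cat_take_drop k w); congr (_ ++ _).
apply: (@eq_from_nth _ false); first by rewrite size_drop size_tail /k; lia.
move=> q; rewrite size_drop => Hq; rewrite nth_drop.
case: q Hq => [|q] Hq; first by rewrite addn0 tz_zero.
rewrite /= nth_nseq ifT; last by rewrite /k in Hq; lia.
apply: tz_one; rewrite /k in Hq *; lia.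
Qed.

Lemma suffix_tz (w : word) m : suffix (tail_word m) w -> tz w = m.
Proof. by move=> /suffixP [P ->]; rewrite tz_cat. Qed.

Lemma suffix_tail (w : word) : false \in w -> suffix (tail_word (tz w)) w.
Proof. by move=> H; apply/suffixP; exists (drp (tail_word (tz w)) w); exact: tz_decomp. Qed.

Lemma ne_false (a : word) i j : i < size a -> j < size a ->
  nth false a i != nth false a j -> false \in a.
Proof.
move=> Hi Hj; case Ei: (nth false a i) => H.
  have Ej : nth false a j = false by move: H; case: (nth false a j).
  by rewrite -Ej mem_nth.
by rewrite -Ei mem_nth.
Qed.

Lemma gen_tz (a b : word) i j :
  size b = size a -> i < j -> j < size a ->
  (forall p, p != i -> p != j -> nth false b p = nth false a p) ->
  nth false b i = nth false a j -> nth false b j = nth false a i ->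
  nth false a i != nth false a j ->
  (forall p, i < p -> p < j -> nth false a p = false) ->
  tz b <= (tz a).+1.
Proof.
move=> Hs Hij Hj Hoth Hbi Hbj Hne Hbtw.
have Ha : false \in a by apply: (ne_false _ _ Hne); lia.
have Hl := tz_lt Ha.
set z := size a - (tz a).+1.
have Hz : nth false a z = false by exact: tz_zero.
have Hone : forall p, z < p -> p < size a -> nth false a p = true.
  by move=> p H1 H2; apply: tz_one; rewrite /z in H1; lia.
suff [p [Hp1 Hp2 Hp3]] : exists p, [/\ p < size b, nth false b p = false & z <= p.+1].
  have := tz_le Hp1 Hp2; rewrite /z in Hp3; lia.
case: (eqVneq z i) => [Ezi|Nzi].
  exists j; split; first by lia.
    by rewrite Hbj -Ezi.
  lia.
case: (eqVneq z j) => [Ezj|Nzj].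
  have Hai : nth false a i = true.
    by move: Hne; rewrite -Ezj Hz; case: (nth false a i).
  case: (eqVneq i.+1 j) => [Eij|Nij].
    exists i; split; first by lia.
      by rewrite Hbi -Ezj.
    lia.
  exists j.-1; split; first by lia.
    rewrite Hoth; first (apply: Hbtw; lia).
      by apply/eqP; lia.
    by apply/eqP; lia.
  lia.
exists z; split; first by rewrite Hs; rewrite /z; lia.
  by rewrite Hoth.
lia.
Qed.

Lemma transp_tz (u v : word) : hom_transp u v ->
  [/\ false \in u, false \in v, tz v <= (tz u).+1 & tz u <= (tz v).+1].
Proof.
move=> [i [j [Hij Hj Hne Hbtw Ev]]]; subst v.
set v := set_nth _ (set_nth _ _ _ _) _ _.
have Hs : size v = size u by rewrite /v !size_set_nth; lia.
have Hoth : forall p, p != i -> p != j -> nth false v p = nth false u p.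
  by move=> p Hi Hjj; rewrite /v nth_set_nth /= (negbTE Hjj) nth_set_nth /= (negbTE Hi).
have Hvi : nth false v i = nth false u j.
  rewrite /v nth_set_nth /= ifF; last by apply/eqP; lia.
  by rewrite nth_set_nth /= eqxx.
have Hvj : nth false v j = nth false u i by rewrite /v nth_set_nth /= eqxx.
have Hu : false \in u by apply: (ne_false _ _ Hne); lia.
have Hne' : nth false v i != nth false v j by rewrite Hvi Hvj eq_sym.
have Hv : false \in v by apply: (ne_false _ _ Hne'); lia.
split => //.
  exact: (gen_tz Hs Hij Hj Hoth Hvi Hvj Hne Hbtw).
apply: (gen_tz (esym Hs) Hij) => //.
- by rewrite Hs.
- by move=> p H1 H2; rewrite Hoth.
- by move=> p H1 H2; rewrite Hoth ?Hbtw //; apply/eqP; lia.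
Qed.

Definition pre (w : word) := drp (tail_word (tz w)) w.

Definition Inv n (L : seq word) :=
  [/\ forall w, w \in L -> size w = n,
      forall i, i.+1 < size L -> differ_hom (nth [::] L i) (nth [::] L i.+1)
    & suffix_partitioned L].

Lemma Inv_infix n (A M B : seq word) : Inv n (A ++ M ++ B) -> Inv n M.
Proof.
case=> Hs Hg Hp.
have Hn : forall i, i < size M -> nth [::] (A ++ M ++ B) (size A + i) = nth [::] M i.
  by move=> i Hi; rewrite nth_cat ltnNge leq_addr /= addKn nth_cat Hi.
split.
- by move=> w Hw; apply: Hs; rewrite !mem_cat Hw orbT.
- move=> i Hi; rewrite -(Hn i) -?(Hn i.+1) //; last lia.
  rewrite addnS; apply: Hg; rewrite !size_cat; lia.
- move=> s i l j H1 H2 H3 Si Sj.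
  rewrite -Hn; last lia.
  apply: (Hp s (size A + i) (size A + l) (size A + j)); try lia.
  + by rewrite !size_cat; lia.
  + by rewrite Hn //; lia.
  + by rewrite Hn.
Qed.

Lemma set_nth_catl (X : Type) (x0 : X) p T k a : k < size p ->
  set_nth x0 (p ++ T) k a = set_nth x0 p k a ++ T.
Proof.
by elim: p k => [|x p IH] [|k] //= H; rewrite IH.
Qed.

Lemma transp_strip (p q T : word) : size p = size q ->
  hom_transp (p ++ T) (q ++ T) -> hom_transp p q.
Proof.
move=> Hpq [i [j [Hij Hj Hne Hbtw E]]].
have Hjp : j < size p.
  rewrite ltnNge; apply/negP => Hjp.
  have := congr1 (fun s => nth false s j) E.
  rewrite /= nth_set_nth /= eqxx nth_cat ifF; last by apply/negbTE; rewrite -leqNgt -Hpq.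
  move=> Eq; move: Hne.
  rewrite [X in _ != X]nth_cat ifF; last by apply/negbTE; rewrite -leqNgt.
  by rewrite Hpq Eq eqxx.
have Hip : i < size p by lia.
move: Hne E; rewrite !nth_cat Hip Hjp => Hne E.
exists i, j; split => //.
- by move=> l H1 H2; have := Hbtw l H1 H2; rewrite nth_cat ifT //; lia.
- move: E; rewrite set_nth_catl // set_nth_catl; last by rewrite size_set_nth; lia.
  move=> E; apply/eqP.
  have Hsz : size q = size (set_nth false (set_nth false p i (nth false p j)) j (nth false p i)).
    by rewrite !size_set_nth; lia.
  by have := eqseq_cat T T Hsz; rewrite E eqxx andbT => <-.
Qed.

Lemma size_drp (T w : word) : size (drp T w) = size w - size T.
Proof. by rewrite /drp size_takel // leq_subr. Qed.

Lemma differ_strip (a b T : word) : a = drp T a ++ T -> b = drp T b ++ T ->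
  size a = size b -> differ_hom a b -> differ_hom (drp T a) (drp T b).
Proof.
move=> Ea Eb Hs Hd.
have Hs' : size (drp T a) = size (drp T b) by rewrite !size_drp Hs.
case: Hd => H; [left|right]; apply: (@transp_strip _ _ T) => //; by rewrite -Ea -Eb.
Qed.

Lemma suffix_drp (w s T : word) : w = drp T w ++ T ->
  suffix s (drp T w) = suffix (s ++ T) w.
Proof. by move=> E; rewrite [in RHS]E suffix_catl // eqxx. Qed.

Lemma Inv_strip n (M : seq word) T : Inv n M ->
  (forall w, w \in M -> w = drp T w ++ T) -> Inv (n - size T) (map (drp T) M).
Proof.
case=> Hs Hg Hp HT; split.
- by move=> w' /mapP [w Hw ->]; rewrite size_drp Hs.
- move=> i; rewrite size_map => Hi.
  have Hm : forall k, k < size M -> nth [::] M k \in M by move=> k Hk; apply: mem_nth.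
  have Hi' : i < size M by lia.
  rewrite !(nth_map [::]) //.
  apply: differ_strip.
  - by apply: HT; apply: Hm; lia.
  - by apply: HT; apply: Hm; lia.
  - by rewrite !Hs //; apply: Hm; lia.
  - apply: Hg; lia.
- move=> s i l j H1 H2; rewrite size_map => H3.
  have Hm : forall k, k < size M -> nth [::] M k \in M by move=> k Hk; apply: mem_nth.
  have Hi' : i < size M by lia.
  have Hl' : l < size M by lia.
  rewrite !(nth_map [::]) //.
  rewrite !suffix_drp; try (by apply: HT; apply: Hm; lia).
  exact: Hp.
Qed.

Definition near (a b : nat) := (b <= a.+1) && (a <= b.+1).
Definition contig (s : seq nat) := forall i l j, i <= l -> l <= j -> j < size s ->
  nth 0 s i = nth 0 s j -> nth 0 s l = nth 0 s i.

Lemma ivt_up y r c : path near y r -> y < c -> (exists2 z, z \in r & c <= z) -> c \in r.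
Proof.
elim: r y => [|x r IH] y /=; first by move=> _ _ [z].
move=> /andP [/andP [Hn1 Hn2] Hp] Hy [z Hz Hcz]; rewrite inE.
case: (ltnP x c) => Hxc.
  apply/orP; right; apply: (IH x Hp Hxc); exists z => //.
  by move: Hz; rewrite inE => /orP [/eqP Ez|//]; lia.
by apply/orP; left; apply/eqP; lia.
Qed.

Lemma ivt_down y r c : path near y r -> c < y -> (exists2 z, z \in r & z <= c) -> c \in r.
Proof.
elim: r y => [|x r IH] y /=; first by move=> _ _ [z].
move=> /andP [/andP [Hn1 Hn2] Hp] Hy [z Hz Hcz]; rewrite inE.
case: (ltnP c x) => Hxc.
  apply/orP; right; apply: (IH x Hp Hxc); exists z => //.
  by move: Hz; rewrite inE => /orP [/eqP Ez|//]; lia.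
by apply/orP; left; apply/eqP; lia.
Qed.

Lemma path_eq (r : rel nat) y s : reflexive r -> (forall z, z \in s -> z = y) -> path r y s.
Proof.
elim: s => //= z s IH Hr H.
rewrite (H z) ?inE ?eqxx // Hr /=.
apply: (IH Hr) => w Hw; apply: H; by rewrite inE Hw orbT.
Qed.

Lemma contig_tail x s : contig (x :: s) -> contig s.
Proof. by move=> H i l j H1 H2 H3 E; exact: (H i.+1 l.+1 j.+1). Qed.

Lemma contig_head x y s : contig (x :: y :: s) -> y != x -> x \notin y :: s.
Proof.
move=> H Hne; apply/negP => /(nthP 0) [p Hp Ep].
have := H 0 1 p.+1 isT (_ : 1 <= p.+1) Hp.
by rewrite /= Ep => /(_ isT erefl) E; rewrite E eqxx in Hne.
Qed.

Lemma mono s : sorted near s -> contig s -> sorted leq s \/ sorted geq s.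
Proof.
elim: s => [|x s IH]; first by left.
case: s IH => [|y s] IH; first by left.
rewrite /= => /andP [Hxy Hp] Hc.
have Hc' := contig_tail Hc.
have Hnx := contig_head Hc.
move: Hxy; rewrite /near => /andP [H1 H2].
have Tg : transitive geq by move=> a b c /= ? ?; lia.
have Tl : transitive leq by move=> a b c /= ? ?; lia.
have [Exy | [Exy | Exy]] : y = x \/ y = x.+1 \/ x = y.+1 by lia.
- subst y; case: (IH Hp Hc') => /= H; [left|right]; by rewrite /= leqnn H.
- have Nyx : y != x by apply/eqP; lia.
  move: (Hnx Nyx); rewrite inE negb_or => /andP [_ Hxs].
  case: (IH Hp Hc') => /= H; left; rewrite /= ?H ?andbT; first lia.
  have Hall := order_path_min Tg H.
  have Heq : forall z, z \in s -> z = y.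
    move=> z Hz; have Hzy : z <= y by have := allP Hall z Hz.
    case: (ltnP z y) => Hlt; last by lia.
    have Hx : x \in s.
      apply: (ivt_down Hp); first lia.
      by exists z => //; lia.
    by rewrite Hx in Hxs.
  rewrite (_ : x <= y) //=; last lia.
  by apply: path_eq => //; exact: leqnn.
- have Nyx : y != x by apply/eqP; lia.
  move: (Hnx Nyx); rewrite inE negb_or => /andP [_ Hxs].
  case: (IH Hp Hc') => /= H; right; rewrite /= ?H ?andbT; last lia.
  have Hall := order_path_min Tl H.
  have Heq : forall z, z \in s -> z = y.
    move=> z Hz; have Hzy : y <= z by have := allP Hall z Hz.
    case: (ltnP y z) => Hlt; last by lia.
    have Hx : x \in s.
      apply: (ivt_up Hp); first lia.
      by exists z => //; lia.
    by rewrite Hx in Hxs.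
  rewrite (_ : y <= x) //=; last lia.
  by apply: path_eq => //; exact: leqnn.
Qed.

Lemma filter_nil (T : eqType) (P : pred T) (s : seq T) :
  (forall x, x \in s -> ~~ P x) -> filter P s = [::].
Proof.
elim: s => //= x s IH H; rewrite (negbTE (H x (mem_head _ _))) IH // => y Hy.
by apply: H; rewrite inE Hy orbT.
Qed.

Lemma split3 (g : word -> nat) i (L : seq word) : sorted (relpre g leq) L ->
  L = filter (fun w => g w < i) L ++ filter (fun w => g w == i) L
      ++ filter (fun w => i < g w) L.
Proof.
have Tr : transitive (relpre g leq) by move=> a b c /= ? ?; lia.
elim: L => [|x L IH] //= Hs.
have HsL : sorted (relpre g leq) L := path_sorted Hs.
have Hall := order_path_min Tr Hs.
have Hge : forall w, w \in L -> g x <= g w by move=> w Hw; exact: (allP Hall w Hw).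
case: (ltngtP (g x) i) => H /=.
- by rewrite {1}(IH HsL).
- rewrite (@filter_nil _ (fun w => g w < i)); last first.
    by move=> w Hw; have := Hge w Hw; rewrite -leqNgt; lia.
  rewrite (@filter_nil _ (fun w => g w == i)); last first.
    by move=> w Hw; apply/eqP => E; have := Hge w Hw; lia.
  rewrite /=; congr (_ :: _); symmetry; apply/all_filterP/allP => w Hw /=.
  by have := Hge w Hw; lia.
- rewrite (@filter_nil _ (fun w => g w < i)); last first.
    by move=> w Hw; have := Hge w Hw; rewrite -leqNgt; lia.
  rewrite /=; congr (_ :: _); rewrite {1}(IH HsL) (@filter_nil _ (fun w => g w < i)) //.
  by move=> w Hw; have := Hge w Hw; rewrite -leqNgt; lia.
Qed.

Lemma flat_filter (g : word -> nat) a c (L : seq word) : sorted (relpre g leq) L ->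
  (forall w, w \in L -> a <= g w < a + c) ->
  flatten [seq filter (fun w => g w == i) L | i <- iota a c] = L.
Proof.
have Tr : transitive (relpre g leq) by move=> x y z /= ? ?; lia.
elim: c a L => [|c IH] a L Hs Hb.
  by case: L Hs Hb => // w L _ Hb; have := Hb w (mem_head _ _); lia.
set L' := filter (fun w => a < g w) L.
have E : [seq filter (fun w => g w == i) L | i <- iota a.+1 c] =
         [seq filter (fun w => g w == i) L' | i <- iota a.+1 c].
  apply/eq_in_map => i; rewrite mem_iota => /andP [Hi _].
  rewrite /L' -filter_predI; apply: eq_filter => w /=.
  by case: eqP => //= ->; rewrite Hi.
rewrite /= E IH.
- rewrite [RHS](split3 a Hs) (@filter_nil _ (fun w => g w < a)) //.
  by move=> w Hw; have := Hb w Hw; rewrite -leqNgt; lia.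
- exact: sorted_filter.
- by move=> w; rewrite mem_filter => /andP [H1 H2]; have := Hb w H2; lia.
Qed.

Lemma glue_build (f : nat -> nat) (g : word -> nat) c (L : seq word) :
  sorted (relpre g leq) L -> (forall w, w \in L -> g w < c) ->
  (forall w, w \in L -> false \in w /\ tz w = f (g w)) ->
  glue [seq map pre (filter (fun w => g w == i) L) | i <- iota 0 c] f = L.
Proof.
move=> Hs Hc Hf.
rewrite /glue size_map size_iota -[RHS](@flat_filter g 0 c L Hs); last first.
  by move=> w Hw; have := Hc w Hw; lia.
congr flatten; apply/eq_in_map => i; rewrite mem_iota => /andP [_ Hi] /=.
rewrite (nth_map 0) ?size_iota // nth_iota // add0n -map_comp.
rewrite -[RHS]map_id; apply/eq_in_map => w; rewrite mem_filter => /andP [/eqP Eg Hw] /=.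
have [Hw0 Ht] := Hf w Hw; rewrite -Eg -Ht; symmetry; exact: tz_decomp.
Qed.

Lemma block n (L : seq word) (g : word -> nat) i k : Inv n L -> sorted (relpre g leq) L ->
  (forall w, w \in L -> g w == i -> false \in w /\ tz w = k) ->
  Inv (n - k.+1) (map pre (filter (fun w => g w == i) L)).
Proof.
move=> HI Hs Hk.
set M := filter (fun w => g w == i) L.
have HM : Inv n M.
  apply: (@Inv_infix n (filter (fun w => g w < i) L) _ (filter (fun w => i < g w) L)).
  by rewrite -split3.
have -> : map pre M = map (drp (tail_word k)) M.
  apply/eq_in_map => w; rewrite mem_filter => /andP [Hg Hw].
  by have [_ Ht] := Hk w Hw Hg; rewrite /pre Ht.
rewrite -(size_tail k); apply: Inv_strip => // w; rewrite mem_filter => /andP [Hg Hw].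
by have [Hf Ht] := Hk w Hw Hg; rewrite -Ht; exact: tz_decomp.
Qed.

Lemma step n (L : seq word) :
  (forall n' (L' : seq word), n' < n -> Inv n' L' -> rtp L') -> Inv n L -> rtp L.
Proof.
move=> IH HI; have [Hs Hg Hp] := HI.
have [Hle|Hgt] := leqP (size L) 1.
  move: Hle; case: (L) => [|w [|]] //= _; [exact: rtp_nil | exact: rtp_single].
have Hd : forall u v, differ_hom u v ->
    [/\ false \in u, false \in v, tz v <= (tz u).+1 & tz u <= (tz v).+1].
  by move=> u v [/transp_tz [? ? ? ?] | /transp_tz [? ? ? ?]]; split.
have Hf : forall w, w \in L -> false \in w.
  move=> w /(nthP [::]) [p Hp' <-].
  case: (ltnP p.+1 (size L)) => H; first by have [] := Hd _ _ (Hg p H).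
  case: p Hp' H => [|p] Hp' H; first lia.
  by have [] := Hd _ _ (Hg p Hp').
have Htn : forall w, w \in L -> tz w < n.
  by move=> w Hw; rewrite -(Hs w Hw); apply: tz_lt; apply: Hf.
have Hn : 0 < n.
  have H0 : 0 < size L by lia.
  have Hw : nth [::] L 0 \in L by apply: mem_nth.

  by have := Htn _ Hw; lia.
have Hnear : sorted near (map tz L).
  apply/(sortedP 0) => i; rewrite size_map => Hi.
  have Hi' : i < size L by lia.
  rewrite !(nth_map [::]) //.
  by have [_ _ A B] := Hd _ _ (Hg i Hi); rewrite /near A B.
have Hm : forall k, k < size L -> nth [::] L k \in L by move=> k Hk; apply: mem_nth.
have Hcont : contig (map tz L).
  move=> i l j H1 H2; rewrite size_map => H3.
  have Hi' : i < size L by lia.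
  have Hl' : l < size L by lia.
  rewrite !(nth_map [::]) // => E.
  apply: suffix_tz; apply: (Hp _ i l j) => //.
    by apply: suffix_tail; apply: Hf; apply: Hm.
  by rewrite E; apply: suffix_tail; apply: Hf; apply: Hm.
case: (mono Hnear Hcont) => Hmon.
- have Hso : sorted (relpre tz leq) L by rewrite -sorted_map.
  set Ls := [seq map pre (filter (fun w => tz w == i) L) | i <- iota 0 n].
  have E : glue Ls (fun i => 0 + i) = L.
    apply: glue_build => //.
    by move=> w Hw; split; [apply: Hf | rewrite add0n].
  rewrite -E; apply: rtp_incr.
  + by rewrite size_map size_iota.
  + move=> X /mapP [i]; rewrite mem_iota => /andP [_ Hi] ->.
    apply: (IH (n - i.+1)); first lia.
    apply: block => // w Hw /eqP Ht; split => //; exact: Hf.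
  + by rewrite E => w w' /Hs -> /Hs ->.
- set g := fun w => n.-1 - tz w.
  have Hso : sorted (relpre g leq) L.
    move: Hmon; rewrite sorted_map; apply: sub_sorted => a b /=; rewrite /g; lia.
  set Ls := [seq map pre (filter (fun w => g w == i) L) | i <- iota 0 n].
  have Hsz : size Ls = n by rewrite size_map size_iota.
  have E : glue Ls (fun i => 0 + (size Ls).-1 - i) = L.
    rewrite Hsz; apply: glue_build => //.
      by move=> w Hw; have := Htn w Hw; rewrite /g; lia.
    by move=> w Hw; split; [apply: Hf | have := Htn w Hw; rewrite /g; lia].
  rewrite -E; apply: rtp_decr.
  + by rewrite Hsz.
  + move=> X /mapP [i]; rewrite mem_iota => /andP [_ Hi] ->.
    apply: (IH (n - (n.-1 - i).+1)); first lia.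
    apply: block => // w Hw /eqP Ht; split; first exact: Hf.
    by have := Htn w Hw; move: Ht; rewrite /g; lia.
  + by rewrite E => w w' /Hs -> /Hs ->.
Qed.

Lemma main N : forall n (L : seq word), n <= N -> Inv n L -> rtp L.
Proof.
elim: N => [|N IHN] n L Hn; apply: step => n' L' Hn'; first lia.
apply: IHN; lia.
Qed.

Theorem theorem1 (n k : nat) (S : pred word) (L : seq word) :
  (forall w, S w -> size w = n /\ weight w = k) ->
  hom_gray_code S L ->
  suffix_partitioned L ->
  recursive_tail_partitioned L.
Proof.
move=> HS [_ HL Hg] Hp.
apply: (@main n n) => //; split => //.
by move=> w Hw; have [] := HS w; first by rewrite -HL.
Qed.
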